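(* Let $N$ be a unitarily invariant norm on $M_n$ normalized so that $N(E_{11})=1$, and let $D$ be a positive definite diagonal matrix. Then $$I(N,D)=N'(D^{-1})^{-1},$$ where $N'$ is the dual norm of $N$.
   Context: $M_n$ is the set of complex $n\times n$ matrices, $P(n)$ the positive semidefinite ones, $\circ$ the Hadamard product, $E_{11}$ the matrix unit with a $1$ in position $(1,1)$ and zeros elsewhere. $I(N,A)=\min\{N(A\circ B): B\in P(n),\ N(B)=1\}$. The dual norm is $N'(X)=\max\{|\operatorname{tr}(X Y^* )|: N(Y)\le1\}$; equivalently, if $\Phi$ is the symmetric gauge function with $N(X)=\Phi(s_1(X),\dots,s_n(X))$ (singular values), $N'$ corresponds to the dual gauge function $\Phi'$. *)

(* Defs.v *)
From HB Require Import structures.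
From mathcomp Require Import all_boot all_order all_algebra.
From mathcomp Require Import classical_sets reals.
From mathcomp Require Import complex.
Set Implicit Arguments. Unset Strict Implicit. Unset Printing Implicit Defensive.
Import Order.TTheory GRing.Theory Num.Theory.
Local Open Scope ring_scope.
Local Open Scope classical_set_scope.

Definition cabs {R : realType} (z : R[i]) : R := ComplexField.Normc.normc z.

Definition adjmx {R : realType} m n (X : 'M[R[i]]_(m, n)) : 'M[R[i]]_(n, m) :=
  \matrix_(i, j) Num.conj (X j i).

Definition unitarymx {R : realType} n (U : 'M[R[i]]_n) : Prop :=
  U *m adjmx U = 1%:M.

Definition psdmx {R : realType} n (B : 'M[R[i]]_n) : Prop :=
  adjmx B = B /\ forall x : 'cV[R[i]]_n, 0 <= (adjmx x *m B *m x) 0 0.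

Definition hadamard {R : realType} n (A B : 'M[R[i]]_n) : 'M[R[i]]_n :=
  \matrix_(i, j) (A i j * B i j).

Definition is_matrix_norm {R : realType} n (N : 'M[R[i]]_n -> R) : Prop :=
  [/\ forall A, 0 <= N A,
      forall A, N A = 0 -> A = 0,
      forall (c : R[i]) A, N (c *: A) = cabs c * N A &
      forall A B, N (A + B) <= N A + N B].

Definition unitarily_invariant_norm {R : realType} n (N : 'M[R[i]]_n -> R) : Prop :=
  is_matrix_norm N /\
  forall U V A, unitarymx U -> unitarymx V -> N (U *m A *m V) = N A.

(* I(N,A) = min { N(A o B) : B in P(n), N(B) = 1 }, taken as the infimum
   (attainment is asserted separately in the theorem). *)
Definition Iset {R : realType} n (N : 'M[R[i]]_n -> R) (A : 'M[R[i]]_n) : set R :=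
  [set N (hadamard A B) | B in [set B | psdmx B /\ N B = 1]].

Definition Inorm {R : realType} n (N : 'M[R[i]]_n -> R) (A : 'M[R[i]]_n) : R :=
  inf (Iset N A).

Definition dual_norm {R : realType} n (N : 'M[R[i]]_n -> R) (X : 'M[R[i]]_n) : R :=
  sup [set cabs (\tr (X *m adjmx Y)) | Y in [set Y | N Y <= 1]].

(* Main.v *)
Require Import Defs.
From HB Require Import structures.
From mathcomp Require Import all_boot all_order all_algebra.
From mathcomp Require Import classical_sets reals.
From mathcomp Require Import complex fingroup perm.
From mathcomp Require spectral.
From mathcomp Require Import topology normedtype derive.
From mathcomp Require Import ring lra.
Import Order.TTheory GRing.Theory Num.Theory Num.Def.
Set Implicit Arguments. Unset Strict Implicit. Unset Printing Implicit Defensive.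
Local Open Scope ring_scope.
Local Notation dunitary := Defs.unitarymx.
Section Basic.
Variable R : realType.
Local Notation C := R[i].

Lemma cabsC (z : C) : ((cabs z)%:C)%C = `|z|.
Proof. by []. Qed.

Lemma lecR' (x y : R) : (x <= y) = ((x%:C)%C <= (y%:C)%C :> C).
Proof. by rewrite lecR. Qed.

Lemma cabs_ge0 (z : C) : 0 <= cabs z.
Proof. rewrite lecR' cabsC; exact: normr_ge0. Qed.

Lemma cabsM (x y : C) : cabs (x * y) = cabs x * cabs y.
Proof. by apply: (@complexI R); rewrite rmorphM /= !cabsC normrM. Qed.

Lemma cabsD (x y : C) : cabs (x + y) <= cabs x + cabs y.
Proof. rewrite lecR' raddfD /= !cabsC; exact: ler_normD. Qed.

Lemma cabsR (x : R) : cabs (x%:C)%C = `|x|.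
Proof.
apply: (@complexI R); rewrite cabsC; case: (lerP 0 x) => Hx.
  by rewrite !ger0_norm // ler0c.
by rewrite !ltr0_norm ?rmorphN // ltcR.
Qed.

Lemma adjmxE m k (X : 'M[C]_(m, k)) : adjmx X = map_mx conjC X^T.
Proof. by apply/matrixP=> i j; rewrite !mxE. Qed.

End Basic.
Lemma cabs_nat (R : realType) k : cabs (k%:R : R[i]) = k%:R.
Proof.
by rewrite -(rmorph_nat (real_complex R)) cabsR ger0_norm.
Qed.

Lemma unitaryE (R : realType) m (U : 'M[R[i]]_m) :
  dunitary U <-> U \is spectral.unitarymx.
Proof.
rewrite /dunitary /Defs.unitarymx adjmxE; split; first by move=> H; apply/unitarymxP.
by move/unitarymxP.
Qed.

Lemma unitary_perm (R : realType) m (s : 'S_m) :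
  dunitary (perm_mx s : 'M[R[i]]_m).
Proof.
rewrite /dunitary /Defs.unitarymx adjmxE -map_trmx map_perm_mx tr_perm_mx -perm_mxM mulgV.
exact: perm_mx1.
Qed.

Lemma unitary1 (R : realType) m : dunitary (1%:M : 'M[R[i]]_m).
Proof. by rewrite -perm_mx1; apply: unitary_perm. Qed.

Lemma unitary_diag (R : realType) m (u : 'rV[R[i]]_m) :
  (forall i, u 0 i * conjC (u 0 i) = 1) -> dunitary (diag_mx u).
Proof.
move=> Hu; rewrite /dunitary /Defs.unitarymx; apply/matrixP=> i j.
rewrite mul_diag_mx !mxE; case: (eqVneq i j) => [->|Hij].
  by rewrite !mulr1n Hu.
by rewrite !mulr0n rmorph0 mulr0.
Qed.

Lemma perm_entry (R : realType) m (s t : 'S_m) (A : 'M[R[i]]_m) i j :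
  (perm_mx s *m A *m perm_mx t) i j = A (s i) ((t^-1)%g j).
Proof.
rewrite -row_permE.
have -> : perm_mx t = perm_mx ((t^-1)^-1)%g :> 'M[R[i]]_m by rewrite invgK.
by rewrite -col_permE !mxE.
Qed.

Lemma tperm_eq2 m (x y a : 'I_m) : (tperm x y a == y) = (a == x).
Proof.
by rewrite -(inj_eq (@perm_inj _ (tperm x y))) tpermK tpermR.
Qed.

Section Norm.
Variables (R : realType) (n : nat) (N : 'M[R[i]]_n.+1 -> R).
Hypothesis HN : unitarily_invariant_norm N.
Hypothesis HE : N (delta_mx 0 0) = 1.
Local Notation C := R[i].
Local Notation M := 'M[R[i]]_n.+1.

Lemma N_ge0 A : 0 <= N A. Proof. by case: HN => -[H _ _ _] _; apply: H. Qed.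
Lemma N_eq0 A : N A = 0 -> A = 0. Proof. by case: HN => -[_ H _ _] _; apply: H. Qed.
Lemma NZ c A : N (c *: A) = cabs c * N A. Proof. by case: HN => -[_ _ H _] _; apply: H. Qed.
Lemma ND A B : N (A + B) <= N A + N B. Proof. by case: HN => -[_ _ _ H] _; apply: H. Qed.
Lemma NU U V A : dunitary U -> dunitary V -> N (U *m A *m V) = N A.
Proof. by case: HN => _; apply. Qed.

Lemma N0 : N 0 = 0.
Proof.
rewrite -(scale0r (0:M)) NZ (_ : cabs (0 : C) = 0) ?mul0r //.
exact: (cabs_nat R 0).
Qed.

Lemma N_sum (I : Type) (r : seq I) (P : pred I) (F : I -> M) :
  N (\sum_(i <- r | P i) F i) <= \sum_(i <- r | P i) N (F i).
Proof.
elim/big_rec2: _ => [|i y1 y2 _ Hy]; first by rewrite N0.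
by apply: le_trans (ND _ _) _; rewrite lerD2l.
Qed.

Lemma NP (s t : 'S_n.+1) A : N (perm_mx s *m A *m perm_mx t) = N A.
Proof. by apply: NU; apply: unitary_perm. Qed.

Lemma N_delta (i j : 'I_n.+1) : N (delta_mx i j) = 1.
Proof.
rewrite -HE -(NP (tperm i 0) (tperm 0 j)); congr N.
apply/matrixP=> a b; rewrite perm_entry !mxE tpermV tperm_eq2.
by rewrite tpermC tperm_eq2.
Qed.

End Norm.
Section Norm2.
Variables (R : realType) (n : nat) (N : 'M[R[i]]_n.+1 -> R).
Hypothesis HN : unitarily_invariant_norm N.
Hypothesis HE : N (delta_mx 0 0) = 1.
Local Notation C := R[i].
Local Notation M := 'M[R[i]]_n.+1.

Lemma NU1l A V : dunitary V -> N (A *m V) = N A.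
Proof. by move=> UV; rewrite -{1}[A]mul1mx (NU HN) //; apply: unitary1. Qed.

Lemma NU1r U A : dunitary U -> N (U *m A) = N A.
Proof. by move=> UU; rewrite -[U *m A]mulmx1 (NU HN) //; apply: unitary1. Qed.

Lemma N_entry00 (Y : M) : cabs (Y 0 0) <= N Y.
Proof.
pose s (k : 'I_n.+1) : C := if k == 0 then 1 else -1.
pose S : M := diag_mx (\row_k s k).
have US : dunitary S.
  apply: unitary_diag => k; rewrite mxE /s; case: ifP => _.
    by rewrite rmorph1 mulr1.
  by rewrite rmorphN rmorph1 mulrNN mulr1.
have key : (4%:R : C) *: (Y 0 0 *: delta_mx 0 0)
    = Y + S *m Y *m S + S *m Y + Y *m S.
  apply/matrixP => i j; rewrite !(mul_mx_diag, mul_diag_mx) !mxE /s.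
  case: (eqVneq i 0) => [->|Hi]; case: (eqVneq j 0) => [->|Hj] /=; ring.
have h : N (Y + S *m Y *m S + S *m Y + Y *m S) <= 4%:R * N Y.
  apply: le_trans (ND HN _ _) _; rewrite NU1l //.
  apply: le_trans (lerD (ND HN _ _) (lexx _)) _; rewrite NU1r //.
  apply: le_trans (lerD (lerD (ND HN _ _) (lexx _)) (lexx _)) _.
  by rewrite (NU HN) // -!mulr2n -mulrSr -mulrSr mulr_natl.
rewrite -key (NZ HN) (NZ HN) HE mulr1 cabs_nat in h.
by rewrite -(ler_pM2l (_ : 0 < 4%:R)) ?ltr0n.
Qed.

Lemma N_entry (Y : M) i j : cabs (Y i j) <= N Y.
Proof.
have := N_entry00 (perm_mx (tperm 0 i) *m Y *m perm_mx (tperm 0 j)).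
by rewrite perm_entry (NP HN) tpermL tpermV tpermL.
Qed.

Lemma N_le_sum (Y : M) : N Y <= \sum_i \sum_j cabs (Y i j).
Proof.
rewrite {1}(matrix_sum_delta Y); apply: le_trans (N_sum HN _ _ _) _.
apply: ler_sum => i _; apply: le_trans (N_sum HN _ _ _) _.
by apply: ler_sum => j _; rewrite (NZ HN) (N_delta HN HE) mulr1.
Qed.

End Norm2.
Definition sgb (C : pzRingType) (b : bool) : C := if b then -1 else 1.

Lemma sgb2 (C : pzRingType) b : sgb C b * sgb C b = 1.
Proof. by rewrite /sgb; case: b; rewrite ?mulrNN mulr1. Qed.

Lemma sgb_neg (C : pzRingType) b : sgb C (~~ b) = - sgb C b.
Proof. by rewrite /sgb; case: b; rewrite ?opprK. Qed.

Lemma sum_sign_off (C : numFieldType) m (i j : 'I_m) (c : C) : i != j ->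
  \sum_(f : {ffun 'I_m -> bool}) (sgb C (f i) * c * sgb C (f j)) = 0.
Proof.
move=> Hij; set s := \sum_f _.
pose fl (f : {ffun 'I_m -> bool}) : {ffun 'I_m -> bool} :=
  [ffun k => if k == i then ~~ f k else f k].
have flK : involutive fl.
  by move=> f; apply/ffunP => k; rewrite !ffunE; case: eqP => // _; rewrite negbK.
have Hji : (j == i) = false by rewrite eq_sym (negbTE Hij).
have : s == - s.
  rewrite {1}/s (reindex_inj (inv_inj flK)) /= -sumrN; apply/eqP/eq_bigr => f _.
  by rewrite !ffunE eqxx Hji sgb_neg mulNr mulNr.
rewrite -subr_eq0 opprK -mulr2n mulrn_eq0 /=.
by move/eqP.
Qed.

Section Norm3.
Variables (R : realType) (n : nat) (N : 'M[R[i]]_n.+1 -> R).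
Hypothesis HN : unitarily_invariant_norm N.
Hypothesis HE : N (delta_mx 0 0) = 1.
Local Notation C := R[i].
Local Notation M := 'M[R[i]]_n.+1.

Lemma N_pinch (Y : M) : N (diag_mx (\row_i Y i i)) <= N Y.
Proof.
pose T := {ffun 'I_n.+1 -> bool}.
pose S (f : T) : M := diag_mx (\row_k sgb C (f k)).
have US f : dunitary (S f).
  apply: unitary_diag => k; rewrite mxE /sgb; case: (f k).
    by rewrite rmorphN rmorph1 mulrNN mulr1.
  by rewrite rmorph1 mulr1.
have key : \sum_(f : T) S f *m Y *m S f = #|T|%:R *: diag_mx (\row_i Y i i).
  apply/matrixP => i j; rewrite summxE !mxE.
  under eq_bigr => f _ do rewrite !(mul_mx_diag, mul_diag_mx) !mxE.
  case: (eqVneq i j) => [<-|Hij].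
    under eq_bigr => f _ do rewrite mulrC mulrA sgb2 mul1r.
    by rewrite sumr_const mulr1n mulr_natl.
  by rewrite mulr0n mulr0 sum_sign_off.
have T0 : (0 < #|T|)%N by apply/card_gt0P; exists [ffun=> false].
have h := N_sum HN (index_enum T) xpredT (fun f => S f *m Y *m S f).
rewrite key (NZ HN) cabs_nat in h.
have h2 : \sum_(f <- index_enum T | xpredT f) N (S f *m Y *m S f)
    = \sum_(f : T) N Y by apply: eq_bigr => f _; rewrite (NU HN).
rewrite h2 sumr_const in h.
rewrite -(ler_pM2l (_ : 0 < #|T|%:R)) ?ltr0n //.
by apply: le_trans h _; rewrite mulr_natl.
Qed.

Lemma N_diag_abs (y : 'rV[C]_n.+1) :
  N (diag_mx y) = N (diag_mx (\row_i `|y 0 i|)).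
Proof.
pose u := \row_i (if y 0 i == 0 then 1 else y 0 i / `|y 0 i|).
have Uu : dunitary (diag_mx u).
  apply: unitary_diag => k; rewrite mxE; case: eqP => Hk.
    by rewrite rmorph1 mulr1.
  rewrite -normCK normf_div normr_id divff ?expr1n // normr_eq0; exact/eqP.
have -> : diag_mx y = diag_mx (\row_i `|y 0 i|) *m diag_mx u.
  apply/matrixP => i j; rewrite mul_diag_mx !mxE.
  case: (eqVneq i j) => [->|_]; last by rewrite !mulr0n mulr0.
  rewrite !mulr1n; case: eqP => [->|Hk]; first by rewrite normr0 mul0r.
  by rewrite mulrC divfK // normr_eq0; exact/eqP.
exact: NU1l.
Qed.

End Norm3.
Section Adj.
Variable R : realType.
Local Notation C := R[i].

Lemma adjmx_mul m k l (A : 'M[C]_(m, k)) (B : 'M[C]_(k, l)) :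
  adjmx (A *m B) = adjmx B *m adjmx A.
Proof. by rewrite !adjmxE trmx_mul map_mxM. Qed.

Lemma adjmxK m k (A : 'M[C]_(m, k)) : adjmx (adjmx A) = A.
Proof. by apply/matrixP => i j; rewrite !mxE conjCK. Qed.

Lemma unitary_adjl m (P : 'M[C]_m) : dunitary P -> adjmx P *m P = 1%:M.
Proof.
move/unitaryE => UP; rewrite adjmxE -spectral.invmx_unitary //.
by rewrite mulVmx // spectral.unitarymx_unit.
Qed.

Lemma unitary_adj m (P : 'M[C]_m) : dunitary P -> dunitary (adjmx P).
Proof. by move=> UP; rewrite /dunitary /Defs.unitarymx adjmxK unitary_adjl. Qed.

Lemma herm_spectral m (B : 'M[C]_m) : adjmx B = B ->
  exists P d, [/\ dunitary P, B = adjmx P *m diag_mx d *m P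
                & diag_mx d = P *m B *m adjmx P].
Proof.
move=> HB.
have nB : B \is spectral.normalmx by apply/spectral.normalmxP; rewrite -adjmxE HB.
have := spectral.orthomx_spectralP nB.
set P := spectral.spectralmx B; set d := spectral.spectral_diag B.
have UP : P \is spectral.unitarymx := spectral.spectral_unitarymx B.
rewrite spectral.invmx_unitary // -adjmxE => eB.
have UP' : dunitary P by apply/unitaryE.
exists P, d; split => //.
have E : P *m adjmx P = 1%:M := UP'.
by rewrite {1}eB !mulmxA E mul1mx -mulmxA E mulmx1.
Qed.

Lemma psd_diag m (B : 'M[C]_m) i : psdmx B -> 0 <= B i i.
Proof.
move=> [_ HB]; have := HB (delta_mx i 0).
have -> : adjmx (delta_mx i 0 : 'cV[C]_m) = delta_mx 0 i.
  by apply/matrixP => a b; rewrite !mxE rmorph_nat andbC.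
by rewrite -rowE -colE !mxE.
Qed.

Lemma psd_congr m (B : 'M[C]_m) (Q : 'M[C]_m) :
  psdmx B -> psdmx (Q *m B *m adjmx Q).
Proof.
move=> [HB1 HB2]; split.
  by rewrite !adjmx_mul adjmxK HB1 mulmxA.
move=> x; have := HB2 (adjmx Q *m x).
by rewrite adjmx_mul adjmxK !mulmxA.
Qed.

End Adj.
Section Norm4.
Variables (R : realType) (n : nat) (N : 'M[R[i]]_n.+1 -> R).
Hypothesis HN : unitarily_invariant_norm N.
Hypothesis HE : N (delta_mx 0 0) = 1.
Local Notation C := R[i].
Local Notation M := 'M[R[i]]_n.+1.

Lemma N_diag_le (d : 'rV[C]_n.+1) : N (diag_mx d) <= \sum_i cabs (d 0 i).
Proof.
rewrite diag_mx_sum_delta; apply: le_trans (N_sum HN _ _ _) _.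
by apply: ler_sum => i _; rewrite (NZ HN) (N_delta HN HE) mulr1.
Qed.

Lemma N_psd_tr (B : M) : psdmx B -> ((N B)%:C)%C <= \tr B.
Proof.
move=> HB; have [P [d [UP eB eD]]] := herm_spectral HB.1.
have Hd i : 0 <= d 0 i.
  by have := psd_diag i (psd_congr P HB); rewrite -eD mxE eqxx mulr1n.
have -> : N B = N (diag_mx d).
  by rewrite eB (NU HN) //; exact: unitary_adj.
have -> : \tr B = \tr (diag_mx d).
  by rewrite eB mxtrace_mulC mulmxA (UP : P *m adjmx P = 1%:M) mul1mx.
rewrite mxtrace_diag; apply: le_trans (_ : ((\sum_i cabs (d 0 i))%:C)%C <= _).
  by rewrite -lecR' N_diag_le.
rewrite rmorph_sum /= (eq_bigr (fun i => d 0 i)) ?lexx // => i _.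
by rewrite cabsC ger0_norm.
Qed.

Lemma N_rank1 (v : 'cV[C]_n.+1) : \sum_i `|v i 0| ^+ 2 = 1 ->
  N (v *m adjmx v) = 1.
Proof.
move=> Hv.
have vv : adjmx v *m v = 1%:M.
  apply/matrixP => a b; rewrite !ord1 !mxE /= -Hv; apply: eq_bigr => k _.
  by rewrite !mxE normCKC.
set B0 := v *m adjmx v.
have HB0 : adjmx B0 = B0 by rewrite /B0 adjmx_mul adjmxK.
have psdB0 : psdmx B0.
  split => // x; rewrite /B0 !mulmxA -(mulmxA _ _ x).
  have -> : adjmx v *m x = adjmx (adjmx x *m v) by rewrite adjmx_mul adjmxK.
  by rewrite !mxE big_ord1 !mxE mul_conjC_ge0.
have trB0 : \tr B0 = 1 by rewrite /B0 mxtrace_mulC vv mxtrace1.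
have B0B0 : B0 *m B0 = B0.
  by rewrite /B0 mulmxA -(mulmxA v) vv mulmx1.
apply/eqP; rewrite eq_le; apply/andP; split.
  by rewrite lecR' rmorph1 -trB0 N_psd_tr.
have [P [d [UP eB eD]]] := herm_spectral HB0.
have UPl := unitary_adjl UP.
have dd : diag_mx d *m diag_mx d = diag_mx d.
  rewrite eD -!mulmxA (mulmxA (adjmx P)) UPl mul1mx.
  by rewrite !mulmxA -(mulmxA (P *m v) (adjmx v) v) vv mulmx1.
have trd : \sum_i d 0 i = 1.
  by rewrite -mxtrace_diag eD mxtrace_mulC mulmxA UPl mul1mx trB0.
have [k Hk] : exists k, d 0 k != 0.
  case: (pickP (fun k => d 0 k != 0)) => [k Hk|H]; first by exists k.
  move: trd; rewrite big1 => [/esym/eqP|i _]; first by rewrite oner_eq0.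
  by have := H i; move/negbFE/eqP.
have dk : d 0 k = 1.
  have := congr1 (fun X : M => X k k) dd; rewrite mul_diag_mx !mxE eqxx mulr1n.
  by move=> /(congr1 (fun x => x / d 0 k)); rewrite mulfK // divff.
have -> : N B0 = N (diag_mx d).
  by rewrite eB (NU HN) //; exact: unitary_adj.
have := N_entry HN HE (diag_mx d) k k; rewrite mxE eqxx mulr1n dk.
by rewrite -(mulr1n 1) cabs_nat.
Qed.

End Norm4.
Import numFieldNormedType.Exports.
Local Open Scope classical_set_scope.
Section Analysis.
Variable R : realType.

Lemma coord_le k (v : 'rV[R]_k) i : `|v 0 i| <= `|v|.
Proof.
rewrite [leRHS]/normr /= mx_normrE.
by apply/boolp.bigmax_geP; right => /=; exists (0, i).
Qed.

Lemma lip_cont k (g : 'rV[R]_k -> R) (K : R) :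
  (forall x y, `|g x - g y| <= K * `|x - y|) -> continuous g.
Proof.
move=> Hg x.
apply/(@cvgrPdist_lt _ _ _ (nbhs x) (nbhs_filter x)) => e e0.
have K0 : 0 < `|K| + 1 by rewrite ltr_wpDl.
have ed : 0 < e / (`|K| + 1) by rewrite divr_gt0.
have := @cvgr_dist_lt _ _ _ (nbhs x) (nbhs_filter x) id x (@cvg_id _ (nbhs x)) _ ed.
apply: filterS => y /= Hy.
apply: le_lt_trans (Hg x y) _.
have h1 : K * `|x - y| <= (`|K| + 1) * `|x - y|.
  apply: ler_wpM2r => //.
  by rewrite (le_trans (ler_norm K)) // lerDl.
rewrite ltr_pdivlMr // mulrC in Hy.
exact: le_lt_trans h1 Hy.
Qed.

Lemma simplex_compact k :
  compact [set p : 'rV[R]_k | (forall i, 0 <= p 0 i) /\ \sum_i p 0 i = 1].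
Proof.
apply: bounded_closed_compact.
  exists 1; split => // M M1 p [Hp Hs]; apply: le_trans (ltW M1).
  rewrite /normr /= mx_normrE; apply/bigmax_leP; split => // -[a b] _ /=.
  by rewrite ord1 ger0_norm // -Hs (bigD1 b) //= lerDl sumr_ge0.
have -> : [set p : 'rV[R]_k | (forall i, 0 <= p 0 i) /\ \sum_i p 0 i = 1] =
   (\bigcap_(i in setT) [set p : 'rV[R]_k | 0 <= p 0 i]) `&`
   [set p : 'rV[R]_k | \sum_i p 0 i = 1].
  apply/seteqP; split => p /=.
    by move=> [H1 H2]; split => // i _; apply: H1.
  by move=> [H1 H2]; split => // i; apply: H1.
apply: closedI.
  apply: closed_bigI => i _.
  apply: (@preimage_closed _ _ (fun p : 'rV[R]_k => p 0 i) [set x | 0 <= x]);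
    last exact: closed_ge.
  move=> x _; apply: (@lip_cont _ (fun p : 'rV[R]_k => p 0 i) 1) => a b.
  by rewrite mul1r; have := coord_le (a - b) i; rewrite !mxE.
apply: (@preimage_closed _ _ (fun p : 'rV[R]_k => \sum_i p 0 i) [set x | x = 1]);
  last exact: closed_eq.
move=> x _.
apply: (@lip_cont _ (fun p : 'rV[R]_k => \sum_i p 0 i) (k%:R)) => a b.
rewrite -sumrB; apply: le_trans (ler_norm_sum _ _ _) _.
apply: le_trans (_ : \sum_(i < k) `|a - b| <= _).
  by apply: ler_sum => i _; have := coord_le (a - b) i; rewrite !mxE.
by rewrite sumr_const card_ord mulr_natl.
Qed.

End Analysis.
Section MainLemmas.
Variable R : realType.
Local Notation C := R[i].

Lemma cabs0 : cabs (0 : C) = 0.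
Proof. exact: (cabs_nat R 0). Qed.

Lemma cabsJ (z : C) : cabs (conjC z) = cabs z.
Proof. by apply: (@complexI R); rewrite !cabsC norm_conjC. Qed.

Lemma conjR (x : R) : conjC ((x%:C)%C : C) = (x%:C)%C.
Proof. exact: conjc_real. Qed.

Lemma conj_ge0' (z : C) : 0 <= z -> conjC z = z.
Proof. by move=> h; apply/CrealP; apply: ger0_real. Qed.

Lemma cabs_sum (I : finType) (F : I -> C) :
  cabs (\sum_i F i) <= \sum_i cabs (F i).
Proof.
elim/big_rec2: _ => [|i y1 y2 _ Hy]; first by rewrite cabs0.
by apply: le_trans (cabsD _ _) _; rewrite lerD2l.
Qed.

Lemma psd_rank1 m (v : 'cV[C]_m) : psdmx (v *m adjmx v).
Proof.
split; first by rewrite adjmx_mul adjmxK.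
move=> x; rewrite !mulmxA -(mulmxA _ _ x).
have -> : adjmx v *m x = adjmx (adjmx x *m v) by rewrite adjmx_mul adjmxK.
by rewrite !mxE big_ord1 !mxE mul_conjC_ge0.
Qed.

Lemma tr_diag_adj m (a : 'rV[C]_m) (Y : 'M[C]_m) :
  \tr (diag_mx a *m adjmx Y) = \sum_i a 0 i * conjC (Y i i).
Proof. by rewrite /mxtrace; apply: eq_bigr => i _; rewrite mul_diag_mx !mxE. Qed.

Lemma psd_tr_ge0 m (B : 'M[C]_m) : psdmx B -> 0 <= \tr B.
Proof. by move=> HB; apply: sumr_ge0 => i _; apply: psd_diag. Qed.

End MainLemmas.
Local Close Scope classical_set_scope.
Theorem proposition5p3 (R : realType) (n : nat)
  (N : 'M[R[i]]_n.+1 -> R) (d : 'rV[R[i]]_n.+1) :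
  unitarily_invariant_norm N ->
  N (delta_mx 0 0) = 1 ->
  (forall i, 0 < d 0 i) ->
  Inorm N (diag_mx d) = (dual_norm N (invmx (diag_mx d)))^-1 /\
  (exists B : 'M[R[i]]_n.+1,
      [/\ psdmx B, N B = 1 & N (hadamard (diag_mx d) B) = Inorm N (diag_mx d)]).
Proof.
Local Open Scope classical_set_scope.
move=> HN HE Hd.
pose r i : R := complex.Re (d 0 i).
have dr i : d 0 i = ((r i)%:C)%C.
  have := Hd i; rewrite ltcE /= => /andP[/eqP h _].
  by rewrite /r; case: (d 0 i) h => a b /= ->.
have r0 i : 0 < r i.
  by have := Hd i; rewrite ltcE /= => /andP[_ h].
have dne i : d 0 i != 0 by rewrite lt0r_neq0.
set D := diag_mx d.
have eX : invmx D = diag_mx (\row_i (d 0 i)^-1).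
  have H1 : D *m diag_mx (\row_i (d 0 i)^-1) = 1%:M.
    apply/matrixP => i j; rewrite mul_diag_mx !mxE; case: (eqVneq i j) => [->|_].
      by rewrite !mulr1n divff.
    by rewrite !mulr0n mulr0.
  have [UD _] := mulmx1_unit H1.
  by rewrite -[LHS]mulmx1 -H1 mulmxA mulVmx // mul1mx.
set X := invmx D.
have trX Y : \tr (X *m adjmx Y) = \sum_i (d 0 i)^-1 * conjC (Y i i).
  by rewrite /X eX tr_diag_adj; apply: eq_bigr => i _; rewrite mxE.
have had B : hadamard D B = diag_mx (\row_i (d 0 i * B i i)).
  apply/matrixP => i j; rewrite !mxE; case: (eqVneq i j) => [->|_].
    by rewrite !mulr1n.
  by rewrite !mulr0n mul0r.
set DS := [set cabs (\tr (X *m adjmx Y)) | Y in [set Y | N Y <= 1]].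
have DSn : DS !=set0.
  by exists (cabs (\tr (X *m adjmx 0))); exists 0 => //=; rewrite (N0 HN) ler01.
pose K := \sum_i cabs ((d 0 i)^-1).
have DSub : ubound DS K.
  move=> _ [Y HY <-]; rewrite trX; apply: le_trans (cabs_sum _) _.
  apply: ler_sum => i _; rewrite cabsM; apply: ler_piMr (cabs_ge0 _) _.
  by rewrite cabsJ; apply: le_trans (N_entry HN HE Y i i) HY.
have DSsup : has_sup DS by split => //; exists K.
have dual_ub Y : N Y <= 1 -> cabs (\tr (X *m adjmx Y)) <= dual_norm N X.
  by move=> HY; apply: (sup_upper_bound DSsup); exists Y.
have lower B : psdmx B ->
    cabs (\tr B) <= N (hadamard D B) * dual_norm N X.
  move=> HB; set H := hadamard D B.
  have Bii i : 0 <= B i i := psd_diag i HB.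
  have [H0|Hn0] := eqVneq (N H) 0.
    have Hz : H = 0 := N_eq0 HN H0.
    have -> : \tr B = 0.
      apply: big1 => i _.
      have := congr1 (fun M : 'M[R[i]]_n.+1 => M i i) Hz.
      rewrite /H had !mxE eqxx mulr1n.
      by move/eqP; rewrite mulf_eq0 (negbTE (dne i)) => /eqP.
    by rewrite cabs0 H0 mul0r.
  have Npos : 0 < N H by rewrite lt0r Hn0 (N_ge0 HN).
  set c := (N H)^-1.
  have c0 : 0 < c by rewrite invr_gt0.
  pose Y := ((c%:C)%C) *: H.
  have NY : N Y = 1 by rewrite (NZ HN) cabsR ger0_norm ?mulVf // ltW.
  have trY : \tr (X *m adjmx Y) = (c%:C)%C * \tr B.
    rewrite trX /mxtrace mulr_sumr; apply: eq_bigr => i _.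
    rewrite /Y /H had !mxE eqxx mulr1n !rmorphM /= conjR (conj_ge0' (Bii i)).
    rewrite dr conjR; field.
    by have := dne i; rewrite {1}dr.
  have hY : N Y <= 1 by rewrite NY.
  have h := dual_ub Y hY.
  rewrite trY cabsM cabsR (ger0_norm (ltW c0)) in h.
  by rewrite -(ler_pM2l c0) mulrA /c mulVf ?mul1r ?gt_eqF.
pose g (w : 'rV[R]_n.+1) : 'M[R[i]]_n.+1 :=
  diag_mx (\row_i (d 0 i * ((w 0 i)%:C)%C)).
pose f (w : 'rV[R]_n.+1) := N (g w).
pose S := [set p : 'rV[R]_n.+1 | (forall i, 0 <= p 0 i) /\ \sum_i p 0 i = 1].
have Sn : S !=set0.
  exists (\row_i ((i == 0)%:R)); split => [i|]; first by rewrite mxE ler0n.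
  rewrite (bigD1 0) //= big1 ?addr0 ?mxE ?eqxx // => i /negbTE; rewrite mxE => ->.
  by [].
pose Kd := \sum_i cabs (d 0 i).
have gsplit p q : g p = g q + g (p - q).
  apply/matrixP => i j; rewrite !mxE -mulrnDl; congr (_ *+ _).
  rewrite rmorphB /=; ring.
have gbound p q : N (g (p - q)) <= Kd * `|p - q|.
  apply: le_trans (N_diag_le HN HE _) _.
  rewrite /Kd mulr_suml; apply: ler_sum => i _; rewrite !mxE cabsM cabsR.
  by apply: ler_wpM2l; [exact: cabs_ge0 | have := coord_le (p - q) i; rewrite !mxE].
have fcont : continuous f.
  apply: (@lip_cont R n.+1 f Kd) => p q.
  have h1 : f p <= f q + Kd * `|p - q|.
    by rewrite /f (gsplit p q); apply: le_trans (ND HN _ _) _; rewrite lerD2l.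
  have h2 : f q <= f p + Kd * `|p - q|.
    rewrite /f (gsplit q p) distrC; apply: le_trans (ND HN _ _) _.
    by rewrite lerD2l.
  rewrite ler_norml; apply/andP; split; lra.
have fc : {within S, continuous f} by apply: continuous_subspaceT.
have [p Sp pmin] := EVT_min_rV Sn (@simplex_compact R n.+1) fc.
have pS : S p := set_mem Sp.
set m := f p.
have dgi (w : 'rV[R]_n.+1) i : g w i i = d 0 i * ((w 0 i)%:C)%C.
  by rewrite !mxE eqxx mulr1n.
have m0 : 0 < m.
  rewrite lt0r (N_ge0 HN) andbT; apply/eqP => /(N_eq0 HN) H0.
  case: pS => _ Hs; move: Hs; rewrite big1 => [/esym/eqP|i _].
    by rewrite oner_eq0.
  have := congr1 (fun M : 'M[R[i]]_n.+1 => M i i) H0; rewrite /= dgi mxE.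
  move/eqP; rewrite mulf_eq0 (negbTE (dne i)) /= => /eqP h.
  by have := congr1 (@complex.Re R) h.
have upper : dual_norm N X <= m^-1.
  rewrite /dual_norm -/DS; apply: ge_sup DSn _ => _ [Y HY <-].
  pose s := \sum_i (r i)^-1 * cabs (Y i i).
  have hs : cabs (\tr (X *m adjmx Y)) <= s.
    rewrite trX; apply: le_trans (cabs_sum _) _; apply: ler_sum => i _.
    by rewrite cabsM cabsJ dr -fmorphV cabsR ger0_norm ?lexx // invr_ge0 (ltW (r0 i)).
  apply: le_trans hs _.
  have s0 : 0 <= s.
    by apply: sumr_ge0 => i _; apply: mulr_ge0; [rewrite invr_ge0; exact: ltW | exact: cabs_ge0].
  have [->|sn0] := eqVneq s 0; first by rewrite invr_ge0 (ltW m0).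
  have spos : 0 < s by rewrite lt0r sn0 s0.
  pose q := \row_i ((r i)^-1 * cabs (Y i i) / s).
  have qS : q \in S.
    apply/mem_set; split => [i|].
      rewrite mxE divr_ge0 ?(ltW spos) //.
      by apply: mulr_ge0; [rewrite invr_ge0; exact: ltW | exact: cabs_ge0].
    under eq_bigr => i _ do rewrite mxE.
    by rewrite -mulr_suml divff.
  have sinv : 0 <= s^-1 by rewrite invr_ge0 (ltW spos).
  have fq : f q = s^-1 * N (diag_mx (\row_i Y i i)).
    rewrite (N_diag_abs HN (\row_i Y i i)) /f -(ger0_norm sinv).
    rewrite -cabsR -(NZ HN); congr N; apply/matrixP => i j; rewrite !mxE.
    case: (eqVneq i j) => [->|_]; last by rewrite !mulr0n mulr0.
    rewrite !mulr1n dr -cabsC -!rmorphM /=; congr (_%:C)%C.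
    by field; rewrite sn0 gt_eqF // (r0 j).
  have hq := pmin q qS; rewrite fq in hq.
  have hq2 : m <= s^-1.
    apply: le_trans hq _; apply: ler_piMr => //.
    exact: le_trans (N_pinch HN Y) HY.
  by rewrite -(invrK s) lef_pV2 ?posrE ?invr_gt0.
have pge0 i : 0 <= p 0 i by case: pS.
pose v : 'cV[R[i]]_n.+1 := \col_i ((Num.sqrt (p 0 i))%:C)%C.
have vii i : v i 0 * conjC (v i 0) = ((p 0 i)%:C)%C.
  by rewrite mxE conjR -rmorphM /= -expr2 sqr_sqrtr.
have Hv : \sum_i `|v i 0| ^+ 2 = 1.
  under eq_bigr => i _ do rewrite normCK vii.
  by rewrite -rmorph_sum /= pS.2.
set B := v *m adjmx v.
have Bii i : B i i = ((p 0 i)%:C)%C.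
  by rewrite !mxE big_ord1 !mxE -vii mxE.
have psdB : psdmx B := psd_rank1 v.
have NB : N B = 1 := N_rank1 HN HE Hv.
have hB : N (hadamard D B) = m.
  rewrite had /m /f /g; congr (N (diag_mx _)); apply/rowP => i.
  by rewrite !mxE; congr (_ * _); have := Bii i; rewrite mxE.
have trB : cabs (\tr B) = 1.
  rewrite /mxtrace (eq_bigr _ (fun i _ => Bii i)) -rmorph_sum /= pS.2.
  by rewrite expr1n expr2 mulr0 addr0 sqrtr1.
have dual_eq : dual_norm N X = m^-1.
  apply/eqP; rewrite eq_le upper /=.
  have := lower B psdB; rewrite trB hB => h.
  by rewrite -(ler_pM2l m0) mulfV ?gt_eqF.
have lb : lbound (Iset N D) m.
  move=> _ [B' [HB' NB'] <-].
  have t1 : 1 <= cabs (\tr B').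
    rewrite lecR' cabsC ger0_norm ?psd_tr_ge0 //.
    by have := N_psd_tr HN HE HB'; rewrite NB' rmorph1.
  have := le_trans t1 (lower B' HB'); rewrite dual_eq => h.
  by rewrite -(mul1r m) -ler_pdivlMr.
have Bin : Iset N D m by exists B.
have Iinf : Inorm N D = m.
  apply/eqP; rewrite eq_le; apply/andP; split.
    by apply: (ge_inf _ Bin); exists m.
  by apply: lb_le_inf => //; exists m.
split; first by rewrite Iinf dual_eq invrK.
by exists B; split => //; rewrite Iinf.
Qed.
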